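(* Let $W\in\mathbb{D}_n$ be a Dale matrix with excitatory set $\mathcal{E}$ and inhibitory set $\mathcal{I}$, and let $W'\in\mathbb{D}_{n+1}$ be a Dale matrix with excitatory set $\mathcal{E}$ and inhibitory set $\mathcal{I}\cup\{n+1\}$ such that $W'_{[n]}=W$ (the principal submatrix on $[n]$) and such that for every $i\in\mathcal{E}$: if $W'_{i(n+1)}<0$ then there exists $j\in\mathcal{I}$ with $W_{ij}<0$. Assume both $W$ and $W'$ satisfy the Ground Assumption. Then $\mathcal{C}(W)=\mathcal{C}(W')$.
   Context: Threshold-linear network: $\dot x_i=-x_i+[\sum_j W_{ij}x_j+b_i]_+$ with $[y]_+=\max(0,y)$; a fixed point is $x^*$ with $x^*=[Wx^*+b]_+$. A Dale matrix $W\in\mathbb{D}_n$ is an $n\times n$ real matrix with a partition $[n]=\mathcal{E}\sqcup\mathcal{I}$ such that $W_{ii}=0$, $W_{ji}\ge0$ for all $j$ if $i\in\mathcal{E}$, $W_{ji}\le0$ for all $j$ if $i\in\mathcal{I}$. Ground Assumption: $(I-W)_\sigma$ nonsingular for every nonempty $\sigma$ of indices. Excitatory support: $\mathrm{supp}_+x=\{i\in\mathcal{E}:x_i>0\}$. Combinatorial code: $\mathcal{C}(W)=\{\mathrm{supp}_+x^*: b\in\mathbb{R}^n_{\ge0},\ x^*\in\mathbb{R}^n_{\ge0}\text{ a fixed point of }(W,b)\}$. *)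

(* Defs.v *)
From HB Require Import structures.
From mathcomp Require Import all_boot all_order all_algebra.
From mathcomp Require Import reals.
Set Implicit Arguments. Unset Strict Implicit. Unset Printing Implicit Defensive.
Import Order.TTheory GRing.Theory Num.Theory.
Local Open Scope ring_scope.

Definition is_Dale (R : realType) (n : nat) (W : 'M[R]_n) (E : {set 'I_n}) : Prop :=
  (forall i, W i i = 0) /\
  (forall i j : 'I_n, (j \in E -> 0 <= W i j) /\ (j \notin E -> W i j <= 0)).

(* Principal submatrix A_sigma, indices of sigma in increasing order. *)
Definition principal_sub (R : realType) (n : nat) (A : 'M[R]_n) (s : {set 'I_n})
  : 'M[R]_#|s| :=
  \matrix_(i < #|s|, j < #|s|) A (enum_val i) (enum_val j).

Definition ground_assumption (R : realType) (n : nat) (W : 'M[R]_n) : Prop :=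
  forall s : {set 'I_n}, s != set0 -> principal_sub (1%:M - W) s \in unitmx.

Definition relu (R : realType) (y : R) : R := Num.max y 0.

Definition is_fixed_point (R : realType) (n : nat) (W : 'M[R]_n) (b x : 'cV[R]_n) : Prop :=
  x = map_mx (@relu R) (W *m x + b).

Definition nonneg_vec (R : realType) (n : nat) (v : 'cV[R]_n) : Prop :=
  forall i, 0 <= v i 0.

Definition supp_plus (R : realType) (n : nat) (E : {set 'I_n}) (x : 'cV[R]_n)
  : {set 'I_n} := [set i in E | 0 < x i 0].

Definition in_code (R : realType) (n : nat) (W : 'M[R]_n) (E : {set 'I_n})
  (S : {set 'I_n}) : Prop :=
  exists b x : 'cV[R]_n,
    nonneg_vec b /\ nonneg_vec x /\ is_fixed_point W b x /\ supp_plus E x = S.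

Definition emb (n : nat) (i : 'I_n) : 'I_n.+1 := widen_ord (leqnSn n) i.

(* Main.v *)
Require Import Defs.
From HB Require Import structures.
From mathcomp Require Import all_boot all_order all_algebra.
From mathcomp Require Import reals.
From mathcomp Require Import lra.
Import Order.TTheory GRing.Theory Num.Theory.
Local Open Scope ring_scope.

Lemma code_char (R : realType) n (W : 'M[R]_n) E S :
  in_code W E S <-> exists x : 'cV[R]_n, nonneg_vec x /\
     (forall i, (W *m x) i 0 <= x i 0) /\ supp_plus E x = S.
Proof.
split.
- move=> [b [x [hb [hx [hf hs]]]]]; exists x; split=> //; split=> // i.
  have e : x i 0 = relu ((W *m x + b) i 0) by rewrite {1}hf mxE.
  have e2 : (W *m x + b) i 0 = (W *m x) i 0 + b i 0 by rewrite mxE.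
  rewrite e /relu e2 le_max; apply/orP; left; rewrite lerDl; exact: hb.
- move=> [x [hx [hw hs]]]; exists (x - W *m x), x; split.
    by move=> i; have := hw i; rewrite !mxE; lra.
  split=> //; split=> //.
  rewrite /is_fixed_point addrC subrK; apply/matrixP => i j.
  by rewrite mxE /relu (ord1 j) max_l //; exact: hx.
Qed.

Lemma emb_lift n (i : 'I_n) : emb i = lift ord_max i.
Proof. by apply/val_inj => /=; rewrite /bump leqNgt ltn_ord. Qed.

Lemma emb_inj n : injective (@emb n).
Proof. by move=> i j /(congr1 val) /= h; apply: val_inj. Qed.

Lemma ord_max_notin n (A : {set 'I_n}) : ord_max \notin @emb n @: A.
Proof.
apply/imsetP => [[i _ /(congr1 val) /= h]].
by have := ltn_ord i; rewrite -h ltnn.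
Qed.

Lemma mul_split (R : realType) n (W' : 'M[R]_n.+1) (x : 'cV[R]_n.+1) k :
  (W' *m x) k 0 = \sum_(j < n) W' k (emb j) * x (emb j) 0 + W' k ord_max * x ord_max 0.
Proof. by rewrite mxE big_ord_recr. Qed.

Theorem mainTheorem11 (R : realType) (n : nat) (W : 'M[R]_n) (W' : 'M[R]_n.+1)
  (E : {set 'I_n}) :
  is_Dale W E ->
  is_Dale W' (@emb n @: E) ->
  (forall i j : 'I_n, W' (emb i) (emb j) = W i j) ->
  (forall i : 'I_n, i \in E -> W' (emb i) ord_max < 0 ->
     exists j : 'I_n, j \notin E /\ W i j < 0) ->
  ground_assumption W ->
  ground_assumption W' ->
  (forall S : {set 'I_n}, in_code W E S <-> in_code W' (@emb n @: E) (@emb n @: S)) /\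
  (forall T : {set 'I_n.+1}, in_code W' (@emb n @: E) T ->
     exists S : {set 'I_n}, T = @emb n @: S).
Proof.
move=> [dW dWc] [dW'0 dW'] hsub hinh _ _.
have colm : forall k, W' k ord_max <= 0 by move=> k; apply: (proj2 (dW' k ord_max)); exact: ord_max_notin.
split.
- move=> S; rewrite !code_char; split.
  + move=> [x [hx [hw hs]]].
    set y := Num.max (\sum_(j < n) W' ord_max (emb j) * x j 0) 0.
    pose x' : 'cV[R]_n.+1 := \col_k (if unlift ord_max k is Some j then x j 0 else y).
    have x'e : forall i, x' (emb i) 0 = x i 0 by move=> i; rewrite mxE emb_lift liftK.
    have x'm : x' ord_max 0 = y by rewrite mxE unlift_none.
    exists x'; split; [|split].
    * move=> k; rewrite mxE; case: (unlift ord_max k) => [j|]; first exact: hx.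
      by rewrite /y le_max lexx orbT.
    * move=> k; rewrite mul_split x'm; under eq_bigr => j _ do rewrite x'e.
      case: (unliftP ord_max k) => [j ->|->].
      -- rewrite -emb_lift x'e; under eq_bigr => j0 _ do rewrite hsub.
         have h1 := hw j; rewrite mxE in h1.
         have h2 : W' (emb j) ord_max * y <= 0.
           by apply: mulr_le0_ge0; [exact: colm | rewrite /y le_max lexx orbT].
         lra.
      -- by rewrite dW'0 mul0r addr0 x'm /y le_max lexx.
    * apply/setP => k; rewrite inE -hs.
      case: (unliftP ord_max k) => [j ->|->].
      -- by rewrite -emb_lift !(mem_imset _ _ (@emb_inj n)) x'e inE.
      -- by rewrite (negbTE (ord_max_notin _ E)) (negbTE (ord_max_notin _ _)).
  + move=> [x' [hx [hw hs]]].
    set y := x' ord_max 0.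
    pose a i := - (W' (emb i) ord_max * y).
    pose d i := - \sum_(j < n | j \notin E) W i j.
    pose t := \sum_i (a i + a i / d i).
    have a_ge0 : forall i, 0 <= a i.
      by move=> i; rewrite /a oppr_ge0; apply: mulr_le0_ge0; [exact: colm | exact: hx].
    have d_ge0 : forall i, 0 <= d i.
      by move=> i; rewrite /d oppr_ge0; apply: sumr_le0 => j hj; exact: (dWc i j).2.
    have F_ge0 : forall i, 0 <= a i + a i / d i.
      by move=> i; apply: addr_ge0; [exact: a_ge0 | apply: divr_ge0].
    have t_ge : forall i, a i + a i / d i <= t.
      move=> i; rewrite /t (bigD1 i) //=.
      have : 0 <= \sum_(j < n | j != i) (a j + a j / d j) by apply: sumr_ge0 => j _.
      lra.
    have t_ge0 : 0 <= t by apply: sumr_ge0 => j _.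
    pose x : 'cV[R]_n := \col_i (x' (emb i) 0 + (if i \in E then 0 else t)).
    exists x; split; [|split].
    * move=> i; rewrite mxE; apply: addr_ge0; first exact: hx.
      by case: (i \in E).
    * move=> i.
      have hWx : (W *m x) i 0 = \sum_j W i j * x' (emb j) 0 - d i * t.
        rewrite mxE /d mulNr opprK mulr_suml [X in _ = _ + X]big_mkcond -big_split /=.
        apply: eq_bigr => j _; rewrite mxE mulrDr.
        by case: (j \in E); rewrite /= ?mulr0 ?addr0.
      have hD : \sum_j W i j * x' (emb j) 0 - a i <= x' (emb i) 0.
        have := hw (emb i); rewrite mul_split.
        under eq_bigr => j _ do rewrite hsub.
        rewrite /a -/y; lra.
      have dt : 0 <= d i * t by apply: mulr_ge0.
      have ti := t_ge i.
      have ha := a_ge0 i.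
      have hdi : 0 <= a i / d i by apply: divr_ge0.
      rewrite hWx mxE.
      case iE: (i \in E).
      -- rewrite addr0.
         have [e0|lt0] := eqVneq (a i) 0.
           by rewrite e0 in hD; lra.
         have wlt : W' (emb i) ord_max < 0.
           rewrite lt_neqAle colm andbT; apply/eqP => e; move/eqP: lt0; apply.
           by rewrite /a e mul0r oppr0.
         have [j0 [j0E wj0]] := hinh i iE wlt.
         have dpos : 0 < d i.
           rewrite /d (bigD1 j0) //= opprD.
           have : \sum_(j < n | (j \notin E) && (j != j0)) W i j <= 0.
             by apply: sumr_le0 => j /andP[hj _]; exact: (dWc i j).2.
           lra.
         have : d i * (a i / d i) <= d i * t.
           by apply: ler_wpM2l; [exact: d_ge0 | lra].
         rewrite mulrC divfK; last by rewrite gt_eqF.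
         lra.
      -- lra.
    * apply/setP => i; rewrite inE mxE.
      have hS : (i \in S) = (emb i \in @emb n @: S) by rewrite mem_imset //; exact: emb_inj.
      rewrite hS -hs inE (mem_imset _ _ (@emb_inj n)).
      by case: (i \in E); rewrite //= addr0.
- move=> T; rewrite code_char => [[x' [_ [_ hs]]]].
  exists [set i | emb i \in T]; apply/setP => k; apply/idP/imsetP.
  + move=> kT; have : k \in @emb n @: E by move: kT; rewrite -hs inE => /andP[].
    case/imsetP => i _ ek; exists i => //; by rewrite inE -ek.
  + by case=> i; rewrite inE => h ->.
Qed.
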